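(* Let $\xi\in\mathbb{R}$, let $n\ge 2$, $t_1<\dots<t_n$, $\Delta:=\max_{1\le j\le n-1}(t_{j+1}-t_j)$, and let $F\in C^4[t_1,t_n]$. Let $I_4(F)$ be an exponential spline of order $4$ for the operator $L_{(\xi,\xi,-\xi,-\xi)}=\left(\frac{d^2}{dt^2}-\xi^2\right)^2$ with knots $t_1,\dots,t_n$ satisfying $I_4(F)(t_j)=F(t_j)$ for $j=1,\dots,n$, $\frac{d}{dt}I_4(F)(t_1)=F'(t_1)$ and $\frac{d}{dt}I_4(F)(t_n)=F'(t_n)$. Then $$\max_{t\in[t_1,t_n]}|F(t)-I_4(F)(t)|\le \frac{5}{64}\,\Delta^4\max_{\theta\in[t_1,t_n]}\left|L_{(\xi,\xi,-\xi,-\xi)}F(\theta)\right|.$$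
   Context: For real $\lambda_0,\dots,\lambda_N$, $L_{(\lambda_0,\dots,\lambda_N)}=\prod_{j=0}^N\left(\frac{d}{dt}-\lambda_j\right)$ and $E(\lambda_0,\dots,\lambda_N)=\{f\in C^{N+1}(\mathbb{R}):L_{(\lambda_0,\dots,\lambda_N)}f=0\}$. An exponential spline for the knots $t_1<\dots<t_n$ and the operator $L_{(\lambda_0,\dots,\lambda_N)}$ is a function $g\in C^{N-1}[t_1,t_n]$ whose restriction to each interval $[t_j,t_{j+1}]$ coincides with an element of $E(\lambda_0,\dots,\lambda_N)$. *)

(* Defs.v *)
From Stdlib Require Import Reals Lra Lia List.
From Coquelicot Require Import Coquelicot.
Import ListNotations.
Open Scope R_scope.

Definition is_deriv_on (a b : R) (f f' : R -> R) : Prop :=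
  forall x, a <= x <= b ->
    filterlim (fun y => (f y - f x) / (y - x))
      (within (fun y => a <= y <= b /\ y <> x) (locally x))
      (locally (f' x)).

Definition Ck_on (k : nat) (a b : R) (f : R -> R) (d : nat -> R -> R) : Prop :=
  d 0%nat = f /\
  (forall i, (i < k)%nat -> is_deriv_on a b (d i) (d (S i))) /\
  (forall i x, (i <= k)%nat -> a <= x <= b ->
     filterlim (d i) (within (fun y => a <= y <= b) (locally x)) (locally (d i x))).

Fixpoint Lop (lams : list R) (f : R -> R) : R -> R :=
  match lams with
  | [] => f
  | l :: ls => fun x => Derive (Lop ls f) x - l * Lop ls f x
  end.

Definition Espace (lams : list R) (f : R -> R) : Prop :=
  (forall k x, (k <= length lams)%nat -> ex_derive_n f k x) /\
  (forall x, continuous (Derive_n f (length lams)) x) /\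
  (forall x, Lop lams f x = 0).

(* exponential spline for knots t 1 < ... < t n and operator L_lams:
   g in C^(N-1)[t_1,t_n], each restriction to [t_j,t_(j+1)] agrees with an
   element of E(lams). *)
Definition exp_spline (lams : list R) (t : nat -> R) (n : nat) (g : R -> R) : Prop :=
  (exists dg, Ck_on (length lams - 2) (t 1%nat) (t n) g dg) /\
  (forall j, (1 <= j < n)%nat ->
     exists e, Espace lams e /\ forall x, t j <= x <= t (S j) -> g x = e x).

Fixpoint maxgap (t : nat -> R) (k : nat) : R :=
  match k with
  | O => 0
  | S k' => Rmax (maxgap t k') (t (S (S k')) - t (S k'))
  end.

Definition mesh (t : nat -> R) (n : nat) : R := maxgap t (n - 1).

(* Main.v *)
Require Import Defs.
From Stdlib Require Import Reals Lra Lia List.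
From Coquelicot Require Import Coquelicot.
Import ListNotations.
Open Scope R_scope.

Lemma ball_R x (e : posreal) y : ball x e y <-> Rabs (y - x) < e.
Proof. reflexivity. Qed.

Definition cont_on (a b : R) (f : R -> R) : Prop :=
  forall x, a <= x <= b -> forall eps, 0 < eps -> exists del, 0 < del /\
    forall y, a <= y <= b -> Rabs (y - x) < del -> Rabs (f y - f x) < eps.

Lemma within_cont a b f x :
  filterlim f (within (fun y => a <= y <= b) (locally x)) (locally (f x)) ->
  forall eps, 0 < eps -> exists del, 0 < del /\
    forall y, a <= y <= b -> Rabs (y - x) < del -> Rabs (f y - f x) < eps.
Proof.
  intros H eps Heps.
  destruct (proj1 (filterlim_locally f (f x)) H (mkposreal eps Heps)) as [d Hd].
  exists d. split. apply cond_pos. intros y Hy Hyx.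
  apply Hd; auto.
Qed.

Lemma deriv_on_eps a b f f' x : is_deriv_on a b f f' -> a <= x <= b ->
  forall eps, 0 < eps -> exists del, 0 < del /\
    forall y, a <= y <= b -> y <> x -> Rabs (y - x) < del ->
      Rabs ((f y - f x) / (y - x) - f' x) < eps.
Proof.
  intros H Hx eps Heps.
  destruct (proj1 (filterlim_locally _ (f' x)) (H x Hx) (mkposreal eps Heps)) as [d Hd].
  exists d. split. apply cond_pos. intros y Hy Hyx Hd'.
  apply Hd; auto.
Qed.

Lemma deriv_on_interior a b f f' x : is_deriv_on a b f f' -> a < x < b ->
  is_derive f x (f' x).
Proof.
  intros H Hx. apply is_derive_Reals. intros eps Heps.
  destruct (deriv_on_eps a b f f' x H ltac:(lra) eps Heps) as [d [Hd Hd']].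
  assert (Hp : 0 < Rmin d (Rmin (x - a) (b - x))).
  { apply Rmin_glb_lt; [lra|apply Rmin_glb_lt; lra]. }
  exists (mkposreal _ Hp). intros h Hh Hhl. simpl in Hhl.
  assert (H1 := Rmin_l d (Rmin (x - a) (b - x))).
  assert (H2 := Rmin_r d (Rmin (x - a) (b - x))).
  assert (H3 := Rmin_l (x - a) (b - x)).
  assert (H4 := Rmin_r (x - a) (b - x)).
  assert (Habs := Rabs_def2 _ _ Hhl).
  specialize (Hd' (x + h)).
  replace (x + h - x) with h in Hd' by ring.
  apply Hd'; try lra.
Qed.

Lemma cont_on_sub a b p q f : cont_on a b f -> a <= p -> q <= b -> cont_on p q f.
Proof.
  intros H Hp Hq x Hx eps Heps. destruct (H x ltac:(lra) eps Heps) as [d [Hd Hd']].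
  exists d. split; auto. intros y Hy. apply Hd'. lra.
Qed.

Lemma cont_on_deriv a b f f1 : (forall x, is_derive f x (f1 x)) -> cont_on a b f.
Proof.
  intros H x Hx eps Heps.
  assert (C : continuity_pt f x).
  { apply derivable_continuous_pt. exists (f1 x). apply is_derive_Reals. apply H. }
  destruct (C eps Heps) as [d [Hd Hd']].
  exists d. split; auto. intros y Hy Hyx.
  destruct (Req_dec y x) as [->|Hne].
  - rewrite Rminus_eq_0, Rabs_R0; auto.
  - apply (Hd' y). split. split. exact I. intro E; apply Hne; auto. exact Hyx.
Qed.

Lemma cont_on_lin a b f g (c1 c2 : R) : cont_on a b f -> cont_on a b g ->
  cont_on a b (fun x => c1 * f x + c2 * g x).
Proof.
  intros Hf Hg x Hx eps Heps.
  set (e' := eps / (2 * (Rabs c1 + Rabs c2 + 1))).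
  assert (He' : 0 < e').
  { unfold e'. apply Rdiv_lt_0_compat; auto. pose proof (Rabs_pos c1); pose proof (Rabs_pos c2); lra. }
  destruct (Hf x Hx e' He') as [d1 [Hd1 Hd1']].
  destruct (Hg x Hx e' He') as [d2 [Hd2 Hd2']].
  exists (Rmin d1 d2). split. apply Rmin_glb_lt; auto.
  intros y Hy Hyx.
  assert (A1 := Hd1' y Hy (Rlt_le_trans _ _ _ Hyx (Rmin_l _ _))).
  assert (A2 := Hd2' y Hy (Rlt_le_trans _ _ _ Hyx (Rmin_r _ _))).
  replace (c1 * f y + c2 * g y - (c1 * f x + c2 * g x)) with
    (c1 * (f y - f x) + c2 * (g y - g x)) by ring.
  eapply Rle_lt_trans. apply Rabs_triang. rewrite !Rabs_mult.
  assert (B1 : Rabs c1 * Rabs (f y - f x) <= Rabs c1 * e').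
  { apply Rmult_le_compat_l. apply Rabs_pos. lra. }
  assert (B2 : Rabs c2 * Rabs (g y - g x) <= Rabs c2 * e').
  { apply Rmult_le_compat_l. apply Rabs_pos. lra. }
  assert (B3 : (Rabs c1 + Rabs c2) * e' < eps).
  { unfold e'. pose proof (Rabs_pos c1); pose proof (Rabs_pos c2).
    apply (Rmult_lt_reg_r (2 * (Rabs c1 + Rabs c2 + 1))). lra.
    field_simplify; try lra. nra. }
  nra.
Qed.

Lemma mvt_closed f f1 p q : p < q -> (forall x, p <= x <= q -> is_derive f x (f1 x)) ->
  exists c, p <= c <= q /\ f q - f p = f1 c * (q - p).
Proof.
  intros Hpq H.
  destruct (MVT_gen f p q f1) as [c [Hc Hc']].
  - intros x Hx. rewrite Rmin_left in Hx by lra. rewrite Rmax_right in Hx by lra.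
    apply H; lra.
  - intros x Hx. rewrite Rmin_left in Hx by lra. rewrite Rmax_right in Hx by lra.
    apply derivable_continuous_pt. exists (f1 x). apply is_derive_Reals. apply H; lra.
  - rewrite Rmin_left in Hc by lra. rewrite Rmax_right in Hc by lra.
    exists c; split; auto.
Qed.

Definition clampR a b x := Rmax a (Rmin b x).

Lemma clamp_in a b x : a <= b -> a <= clampR a b x <= b.
Proof. intros. unfold clampR. split. apply Rmax_l.
  apply Rmax_lub; auto. apply Rmin_l. Qed.

Lemma clamp_id a b x : a <= x <= b -> clampR a b x = x.
Proof. intros. unfold clampR. rewrite Rmin_right by lra. rewrite Rmax_right by lra. auto. Qed.

Lemma clamp_lip a b x c : a <= c <= b -> Rabs (clampR a b x - c) <= Rabs (x - c).
Proof.
  intros Hc. unfold clampR.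
  destruct (Rle_dec x b); [rewrite Rmin_right by lra | rewrite Rmin_left by lra];
  (destruct (Rle_dec a x); [rewrite Rmax_right by lra| rewrite Rmax_left by lra]);
  try (rewrite Rmax_right by lra);  try (rewrite Rmax_left by lra);
  unfold Rabs; repeat destruct Rcase_abs; lra.
Qed.

Lemma exists_min a b f : a <= b -> cont_on a b f ->
  exists mx, a <= mx <= b /\ forall y, a <= y <= b -> f mx <= f y.
Proof.
  intros Hab Hf.
  destruct (continuity_ab_min (fun x => f (clampR a b x)) a b Hab) as [mx [Hmx' Hmx]].
  - intros c Hc eps Heps. destruct (Hf c Hc eps Heps) as [d [Hd Hd']].
    exists d. split; auto. intros x [_ Hx]. simpl. unfold R_dist in *.
    rewrite (clamp_id a b c Hc). apply Hd'. apply clamp_in; auto.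
    eapply Rle_lt_trans. apply clamp_lip; auto. exact Hx.
  - exists mx. split; auto. intros y Hy. specialize (Hmx' y Hy). simpl in Hmx'.
    rewrite (clamp_id a b mx Hmx), (clamp_id a b y Hy) in Hmx'. auto.
Qed.

Lemma MP_strict (K a b : R) (psi psi1 psi2 : R -> R) : 0 <= K -> a < b ->
  cont_on a b psi ->
  (forall x, a < x < b -> is_derive psi x (psi1 x)) ->
  (forall x, a < x < b -> is_derive psi1 x (psi2 x)) ->
  0 <= psi a -> 0 <= psi b ->
  (forall x, a < x < b -> psi2 x - K * psi x < 0) ->
  forall x, a <= x <= b -> 0 <= psi x.
Proof.
  intros HK Hab Hc Hd1 Hd2 Ha Hb Hop x0 Hx0.
  destruct (Rle_dec 0 (psi x0)) as [|Hneg]; auto. exfalso.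
  destruct (exists_min a b psi ltac:(lra) Hc) as [mx [Hmx Hmin]].
  assert (Hm0 : psi mx < 0) by (specialize (Hmin x0 Hx0); lra).
  assert (Hin : a < mx < b).
  { destruct Hmx as [H1 H2]. split.
    - destruct H1 as [H1|H1]; auto. subst. lra.
    - destruct H2 as [H2|H2]; auto. subst. lra. }
  assert (Hf : psi1 mx = 0).
  { pose (pr := exist (fun l => derivable_pt_lim psi mx l) (psi1 mx)
                 (proj1 (is_derive_Reals _ _ _) (Hd1 mx Hin))).
    change (derive_pt psi mx pr = 0).
    apply (deriv_minimum psi a b mx pr); try lra.
    intros y Hy1 Hy2. apply Hmin; lra. }
  assert (H2neg : psi2 mx < 0).
  { specialize (Hop mx Hin). nra. }
  assert (Hl := proj1 (is_derive_Reals _ _ _) (Hd2 mx Hin)).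
  destruct (Hl (- psi2 mx / 2) ltac:(lra)) as [del Hdel].
  set (eta := Rmin del (b - mx) / 2).
  assert (Heta : 0 < eta).
  { unfold eta. assert (0 < Rmin del (b - mx)). apply Rmin_glb_lt. apply cond_pos. lra. lra. }
  assert (Heta1 : eta < del).
  { unfold eta. assert (Rmin del (b - mx) <= del) by apply Rmin_l. pose proof (cond_pos del). lra. }
  assert (Heta2 : mx + eta < b).
  { unfold eta. assert (Rmin del (b - mx) <= b - mx) by apply Rmin_r. lra. }
  assert (Hneg1 : forall y, mx < y <= mx + eta -> psi1 y < 0).
  { intros y Hy. specialize (Hdel (y - mx) ltac:(lra)).
    assert (Rabs (y - mx) < del). { rewrite Rabs_right by lra. lra. }
    specialize (Hdel H). replace (mx + (y - mx)) with y in Hdel by ring.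
    rewrite Hf in Hdel. apply Rabs_def2 in Hdel. destruct Hdel as [Hd _].
    assert (Hq : (psi1 y - 0) / (y - mx) < 0) by lra.
    destruct (Rle_dec 0 (psi1 y)); auto.
    exfalso. assert (0 <= (psi1 y - 0) / (y - mx)).
    { apply Rmult_le_pos. lra. left. apply Rinv_0_lt_compat. lra. } lra.
    lra. }
  destruct (mvt_closed psi psi1 mx (mx + eta/2)) as [c1 [Hc1 Hc1']]. lra.
  { intros y Hy. apply Hd1. lra. }
  destruct (mvt_closed psi psi1 (mx + eta/2) (mx + eta)) as [c2 [Hc2 Hc2']]. lra.
  { intros y Hy. apply Hd1. lra. }
  assert (psi1 c1 <= 0).
  { destruct (Req_dec c1 mx) as [->|]. lra. left. apply Hneg1. lra. }
  assert (psi1 c2 < 0) by (apply Hneg1; lra).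
  specialize (Hmin (mx + eta) ltac:(lra)).
  nra.
Qed.

Lemma MP (K a b : R) (psi psi1 psi2 : R -> R) : 0 <= K -> a < b ->
  cont_on a b psi ->
  (forall x, a < x < b -> is_derive psi x (psi1 x)) ->
  (forall x, a < x < b -> is_derive psi1 x (psi2 x)) ->
  0 <= psi a -> 0 <= psi b ->
  (forall x, a < x < b -> psi2 x - K * psi x <= 0) ->
  forall x, a <= x <= b -> 0 <= psi x.
Proof.
  intros HK Hab Hc Hd1 Hd2 Ha Hb Hop x0 Hx0.
  destruct (Rle_dec 0 (psi x0)) as [|Hneg]; auto. exfalso.
  set (d := - psi x0 / (2 * ((x0 - a) * (b - x0) + 1))).
  assert (Hq : 0 <= (x0 - a) * (b - x0)) by nra.
  assert (Hdpos : 0 < d).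
  { unfold d. apply Rdiv_lt_0_compat; lra. }
  assert (Hs := MP_strict K a b (fun x => 1 * psi x + d * ((x - a) * (b - x)))
     (fun x => psi1 x + d * (a + b - 2 * x)) (fun x => psi2 x - 2 * d) HK Hab).
  assert (Hdd : d * ((x0 - a) * (b - x0)) < - psi x0).
  { unfold d. apply (Rmult_lt_reg_r (2 * ((x0 - a) * (b - x0) + 1))). lra.
    field_simplify; try lra. nra. }
  assert (0 <= 1 * psi x0 + d * ((x0 - a) * (b - x0))).
  2: lra.
  apply Hs; auto.
  - apply cont_on_lin; auto. apply (cont_on_deriv a b _ (fun x => a + b - 2 * x)).
    intros x. auto_derive; auto. ring.
  - intros x Hx. specialize (Hd1 x Hx).
    apply (is_derive_ext (fun x => psi x + d * ((x - a) * (b - x)))). intros t; rewrite Rmult_1_l; reflexivity.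
    apply (is_derive_plus psi (fun x => d * ((x - a) * (b - x)))); auto.
    auto_derive; auto. ring.
  - intros x Hx. specialize (Hd2 x Hx).
    replace (psi2 x - 2 * d) with (plus (psi2 x) (-2 * d)) by (unfold plus; simpl; ring).
    apply (is_derive_plus psi1 (fun x => d * (a + b - 2 * x))); auto.
    auto_derive; auto. ring.
  - ring_simplify. lra.
  - ring_simplify. lra.
  - intros x Hx. specialize (Hop x Hx).
    assert (0 <= K * (d * ((x - a) * (b - x)))).
    { apply Rmult_le_pos; auto. apply Rmult_le_pos; [lra|nra]. }
    nra.
Qed.

Lemma deriv_cmp_right a b e ep l d : a < b ->
  (forall y, a <= y <= b -> e y <= ep y) -> e b = 0 -> ep b = 0 ->
  is_derive ep b l ->
  (forall eta, 0 < eta -> exists del, 0 < del /\ forall y, a <= y < b -> b - y < del ->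
      Rabs ((e y - e b) / (y - b) - d) < eta) ->
  l <= d.
Proof.
  intros Hab Hle He Hep Hd Hq.
  destruct (Rle_dec l d) as [|Hn]; auto. exfalso.
  set (eta := (l - d) / 2).
  destruct (Hq eta ltac:(unfold eta; lra)) as [d1 [Hd1 Hd1']].
  destruct (proj1 (is_derive_Reals _ _ _) Hd eta ltac:(unfold eta; lra)) as [d2 Hd2].
  set (h := Rmin d1 (Rmin d2 (b - a)) / 2).
  assert (H1 := Rmin_l d1 (Rmin d2 (b - a))).
  assert (H2 := Rmin_r d1 (Rmin d2 (b - a))).
  assert (H3 := Rmin_l d2 (b - a)). assert (H4 := Rmin_r d2 (b - a)).
  pose proof (cond_pos d2).
  assert (Hh : 0 < h).
  { unfold h. assert (0 < Rmin d1 (Rmin d2 (b - a))).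
    apply Rmin_glb_lt; auto. apply Rmin_glb_lt; auto. lra. lra. }
  assert (Hh2 : h < d1 /\ h < d2 /\ h < b - a) by (unfold h; lra).
  specialize (Hd1' (b - h) ltac:(lra) ltac:(lra)).
  specialize (Hd2 (- h) ltac:(lra)).
  assert (Rabs (- h) < d2) by (rewrite Rabs_Ropp, Rabs_right; lra).
  specialize (Hd2 H0). replace (b + - h) with (b - h) in Hd2 by ring.
  rewrite He in Hd1'. rewrite Hep in Hd2.
  replace (b - h - b) with (- h) in Hd1' by ring.
  apply Rabs_def2 in Hd1'. apply Rabs_def2 in Hd2.
  specialize (Hle (b - h) ltac:(lra)).
  assert (E1 : (e (b - h) - 0) / - h = - e (b - h) / h) by (field; lra).
  assert (E2 : (ep (b - h) - 0) / - h = - ep (b - h) / h) by (field; lra).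
  rewrite E1 in Hd1'. rewrite E2 in Hd2.
  assert (- ep (b - h) / h <= - e (b - h) / h).
  { unfold Rdiv. apply Rmult_le_compat_r. left; apply Rinv_0_lt_compat; lra. lra. }
  unfold eta in *. lra.
Qed.

Lemma deriv_cmp_left a b e ep l d : a < b ->
  (forall y, a <= y <= b -> e y <= ep y) -> e a = 0 -> ep a = 0 ->
  is_derive ep a l ->
  (forall eta, 0 < eta -> exists del, 0 < del /\ forall y, a < y <= b -> y - a < del ->
      Rabs ((e y - e a) / (y - a) - d) < eta) ->
  d <= l.
Proof.
  intros Hab Hle He Hep Hd Hq.
  destruct (Rle_dec d l) as [|Hn]; auto. exfalso.
  set (eta := (d - l) / 2).
  destruct (Hq eta ltac:(unfold eta; lra)) as [d1 [Hd1 Hd1']].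
  destruct (proj1 (is_derive_Reals _ _ _) Hd eta ltac:(unfold eta; lra)) as [d2 Hd2].
  set (h := Rmin d1 (Rmin d2 (b - a)) / 2).
  assert (H1 := Rmin_l d1 (Rmin d2 (b - a))).
  assert (H2 := Rmin_r d1 (Rmin d2 (b - a))).
  assert (H3 := Rmin_l d2 (b - a)). assert (H4 := Rmin_r d2 (b - a)).
  pose proof (cond_pos d2).
  assert (Hh : 0 < h).
  { unfold h. assert (0 < Rmin d1 (Rmin d2 (b - a))).
    apply Rmin_glb_lt; auto. apply Rmin_glb_lt; auto. lra. lra. }
  assert (Hh2 : h < d1 /\ h < d2 /\ h < b - a) by (unfold h; lra).
  specialize (Hd1' (a + h) ltac:(lra) ltac:(lra)).
  specialize (Hd2 h ltac:(lra)).
  assert (Rabs h < d2) by (rewrite Rabs_right; lra).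
  specialize (Hd2 H0).
  rewrite He in Hd1'. rewrite Hep in Hd2.
  replace (a + h - a) with h in Hd1' by ring.
  apply Rabs_def2 in Hd1'. apply Rabs_def2 in Hd2.
  specialize (Hle (a + h) ltac:(lra)).
  assert ((e (a + h) - 0) / h <= (ep (a + h) - 0) / h).
  { unfold Rdiv. apply Rmult_le_compat_r. left; apply Rinv_0_lt_compat; lra. lra. }
  unfold eta in *. lra.
Qed.

Lemma sinh_gt u : 0 < u -> 2 * u < exp u - exp (- u).
Proof.
  intros Hu.
  set (f := fun x => exp x - exp (- x) - 2 * x).
  assert (Hd : forall x, is_derive f x (exp x + exp (- x) - 2)).
  { intros x. unfold f. auto_derive; auto. ring. }
  destruct (mvt_closed f _ 0 (u/2) ltac:(lra) (fun x _ => Hd x)) as [c1 [Hc1 E1]].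
  destruct (mvt_closed f _ (u/2) u ltac:(lra) (fun x _ => Hd x)) as [c2 [Hc2 E2]].
  assert (P1 : 0 <= exp c1 + exp (- c1) - 2).
  { pose proof (exp_ineq1_le c1). pose proof (exp_ineq1_le (- c1)). lra. }
  assert (P2 : 0 < exp c2 + exp (- c2) - 2).
  { pose proof (exp_ineq1 c2 ltac:(lra)). pose proof (exp_ineq1 (- c2) ltac:(lra)). lra. }
  assert (f 0 = 0). { unfold f. rewrite Ropp_0, exp_0. ring. }
  assert (0 <= f (u/2)). { nra. }
  assert (0 < f u). { nra. }
  unfold f in *. lra.
Qed.

Lemma tanh_le t : 0 <= t -> exp t - exp (- t) <= t * (exp t + exp (- t)).
Proof.
  intros Ht. destruct Ht as [Ht| <-].
  2: { rewrite Ropp_0. lra. }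
  set (g := fun x => x * (exp x + exp (- x)) - exp x + exp (- x)).
  assert (Hd : forall x, is_derive g x (x * (exp x - exp (- x)))).
  { intros x. unfold g. auto_derive; auto. ring. }
  destruct (mvt_closed g _ 0 t Ht (fun x _ => Hd x)) as [c [Hc E]].
  assert (exp (- c) <= exp c).
  { destruct (Rle_lt_or_eq_dec 0 c) as [H|H]; try lra.
    left; apply exp_increasing; lra. subst. rewrite Ropp_0. lra. }
  assert (0 <= c * (exp c - exp (- c))) by nra.
  assert (g 0 = 0). { unfold g. rewrite Ropp_0, exp_0. ring. }
  unfold g in *. nra.
Qed.

Definition eps_prop (K c H p M : R) : Prop :=
  exists rho tau (v v1 v2 ep ep1 ep2 : R -> R),
  0 < rho /\ tau <= H ^ 2 /\
  (forall x, is_derive v x (v1 x)) /\ (forall x, is_derive v1 x (v2 x)) /\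
  (forall x, is_derive ep x (ep1 x)) /\ (forall x, is_derive ep1 x (ep2 x)) /\
  (forall x, v2 x - K * v x = M) /\ (forall x, ep2 x - K * ep x = v x) /\
  v (c - H) = - p /\ v (c + H) = p /\ ep (c - H) = 0 /\ ep (c + H) = 0 /\
  ep1 (c + H) = rho * (p - tau * M) /\ ep1 (c - H) = rho * (p + tau * M).

Lemma eps_family0 c H p M : 0 < H -> eps_prop 0 c H p M.
Proof.
  intros HH.
  exists (H / 3), (H ^ 2).
  exists (fun x => p * (x - c) / H - M * (H ^ 2 - (x - c) ^ 2) / 2).
  exists (fun x => p / H + M * (x - c)).
  exists (fun x => M).
  exists (fun x => p * ((x - c) ^ 3 - H ^ 2 * (x - c)) / (6 * H)
            - M * (H ^ 2 * (x - c) ^ 2 / 2 - (x - c) ^ 4 / 12) / 2 + 5 * M * H ^ 4 / 24).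
  exists (fun x => p * (3 * (x - c) ^ 2 - H ^ 2) / (6 * H)
            - M * (H ^ 2 * (x - c) - (x - c) ^ 3 / 3) / 2).
  exists (fun x => p * (x - c) / H - M * (H ^ 2 - (x - c) ^ 2) / 2).
  split. lra. split. lra.
  split. { intros x. auto_derive; auto. field. lra. }
  split. { intros x. auto_derive; auto. ring. }
  split. { intros x. auto_derive; auto. field. lra. }
  split. { intros x. auto_derive; auto. field. lra. }
  split. { intros x. ring. }
  split. { intros x. ring. }
  split. field; lra. split. field; lra. split. field; lra. split. field; lra.
  split. field; lra. field; lra.
Qed.

Definition shx xi y := (exp (xi * y) - exp (- (xi * y))) / 2.
Definition chx xi y := (exp (xi * y) + exp (- (xi * y))) / 2.

Lemma shx_neg xi y : shx xi (- y) = - shx xi y.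
Proof. unfold shx. replace (xi * - y) with (- (xi * y)) by ring. rewrite Ropp_involutive. field. Qed.
Lemma chx_neg xi y : chx xi (- y) = chx xi y.
Proof. unfold chx. replace (xi * - y) with (- (xi * y)) by ring. rewrite Ropp_involutive. field. Qed.

Section Funcs.
Variables xi c H p M S C A : R.

Definition fv x := p * shx xi (x - c) / S - M * (1 - chx xi (x - c) / C) / (xi * xi).
Definition fv1 x := p * xi * chx xi (x - c) / S + M * xi * shx xi (x - c) / (xi * xi * C).
Definition fv2 x := p * xi * xi * shx xi (x - c) / S + M * chx xi (x - c) / C.
Definition fe x := p * ((x - c) * chx xi (x - c) / (2 * xi) - H * C * shx xi (x - c) / (2 * xi * S)) / S
  + M * (1 / xi ^ 4 + (x - c) * shx xi (x - c) / (2 * xi ^ 3 * C) + A * chx xi (x - c)).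
Definition fe1 x := p * ((chx xi (x - c) + xi * (x - c) * shx xi (x - c)) / (2 * xi)
     - H * C * chx xi (x - c) / (2 * S)) / S
  + M * ((shx xi (x - c) + xi * (x - c) * chx xi (x - c)) / (2 * xi ^ 3 * C) + A * xi * shx xi (x - c)).
Definition fe2 x := p * (shx xi (x - c) + xi * (x - c) * chx xi (x - c) / 2
     - H * C * xi * shx xi (x - c) / (2 * S)) / S
  + M * ((2 * xi * chx xi (x - c) + xi ^ 2 * (x - c) * shx xi (x - c)) / (2 * xi ^ 3 * C)
     + A * xi ^ 2 * chx xi (x - c)).

Hypothesis Hxi : xi <> 0.
Hypothesis HS : S <> 0.
Hypothesis HC : C <> 0.

Lemma fv_d x : is_derive fv x (fv1 x).
Proof. unfold fv, fv1, shx, chx. auto_derive; auto. change (x + - c) with (x - c). field. auto. Qed.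
Lemma fv1_d x : is_derive fv1 x (fv2 x).
Proof. unfold fv1, fv2, shx, chx. auto_derive; auto. change (x + - c) with (x - c). field. auto. Qed.
Lemma fe_d x : is_derive fe x (fe1 x).
Proof. unfold fe, fe1, shx, chx. auto_derive; auto. change (x + - c) with (x - c). field. auto. Qed.
Lemma fe1_d x : is_derive fe1 x (fe2 x).
Proof. unfold fe1, fe2, shx, chx. auto_derive; auto. change (x + - c) with (x - c). field. auto. Qed.
Lemma fv_ode x : fv2 x - xi * xi * fv x = M.
Proof. unfold fv, fv2. field. auto. Qed.
Lemma fe_ode x : fe2 x - xi * xi * fe x = fv x.
Proof. unfold fe, fe2, fv. field. auto. Qed.
End Funcs.

Lemma eps_family_pos xi c H p M : 0 < xi -> 0 < H -> eps_prop (xi * xi) c H p M.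
Proof.
  intros Hxi HH.
  set (E := exp (xi * H)).
  assert (HE : 1 < E). { unfold E. rewrite <- exp_0. apply exp_increasing. nra. }
  assert (HEi : exp (- (xi * H)) = / E) by (unfold E; apply exp_Ropp).
  set (S := shx xi H). set (C := chx xi H).
  assert (HSe : S = (E - / E) / 2) by (unfold S, shx; rewrite HEi; reflexivity).
  assert (HCe : C = (E + / E) / 2) by (unfold C, chx; rewrite HEi; reflexivity).
  assert (HEinv : 0 < / E < 1).
  { split. apply Rinv_0_lt_compat; lra. rewrite <- Rinv_1. apply Rinv_lt_contravar; lra. }
  assert (HSp : 0 < S) by (rewrite HSe; lra).
  assert (HCp : 0 < C) by (rewrite HCe; lra).
  set (A := - (1 / xi ^ 4 + H * S / (2 * xi ^ 3 * C)) / C).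
  assert (Hx0 : xi <> 0) by lra.
  assert (HS0 : S <> 0) by lra. assert (HC0 : C <> 0) by lra.
  exists ((S * C - xi * H) / (2 * xi * S ^ 2)), (S ^ 2 / (xi ^ 2 * C ^ 2)).
  exists (fv xi c p M S C), (fv1 xi c p M S C), (fv2 xi c p M S C),
    (fe xi c H p M S C A), (fe1 xi c H p M S C A), (fe2 xi c H p M S C A).
  assert (Hp1 : c + H - c = H) by ring.
  assert (Hm1 : c - H - c = - H) by ring.
  split.
  { apply Rdiv_lt_0_compat; [|apply Rmult_lt_0_compat; [lra|apply pow_lt; lra]].
    assert (Hg := sinh_gt (2 * (xi * H)) ltac:(nra)).
    replace (exp (2 * (xi * H))) with (E * E) in Hg
      by (unfold E; rewrite <- exp_plus; f_equal; ring).
    replace (exp (- (2 * (xi * H)))) with (/ E * / E) in Hg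
      by (rewrite <- HEi, <- exp_plus; f_equal; ring).
    assert (S * C = (E * E - / E * / E) / 4) by (rewrite HSe, HCe; field; lra).
    lra. }
  split.
  { assert (Ht := tanh_le (xi * H) ltac:(nra)). fold E in Ht. rewrite HEi in Ht.
    assert (Hsc : S <= xi * H * C) by (rewrite HSe, HCe; lra).
    apply (Rmult_le_reg_r (xi ^ 2 * C ^ 2)). nra.
    unfold Rdiv. rewrite Rmult_assoc, Rinv_l by (apply Rmult_integral_contrapositive; split; apply pow_nonzero; lra). nra. }
  split. { intro x. apply fv_d; auto. }
  split. { intro x. apply fv1_d; auto. }
  split. { intro x. apply fe_d; auto. }
  split. { intro x. apply fe1_d; auto. }
  split. { intro x. apply fv_ode; auto. }
  split. { intro x. apply fe_ode; auto. }
  unfold fv, fe, fe1. rewrite Hp1, Hm1, shx_neg, chx_neg. fold S C.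
  split. { field. auto. }
  split. { field. auto. }
  split. { unfold A. field. auto. }
  split. { unfold A. field. auto. }
  unfold A. rewrite HSe, HCe.
  split.
  - field; repeat split; intro Hc; nra.
  - field; repeat split; intro Hc; nra.
Qed.

Lemma eps_family K c H p M : 0 <= K -> 0 < H -> eps_prop K c H p M.
Proof.
  intros HK HH. destruct HK as [HK| <-].
  - assert (Hs : K = sqrt K * sqrt K) by (rewrite sqrt_sqrt; lra).
    rewrite Hs. apply eps_family_pos; auto. apply sqrt_lt_R0; auto.
  - apply eps_family0; auto.
Qed.

Lemma lin_d f g x df dg (c1 c2 : R) : is_derive f x df -> is_derive g x dg ->
  is_derive (fun y => c1 * f y + c2 * g y) x (c1 * df + c2 * dg).
Proof.
  intros Hf Hg.
  apply (is_derive_plus (fun y => c1 * f y) (fun y => c2 * g y));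
  apply is_derive_scal; auto.
Qed.

Lemma knot_left K M m a b e e1 e2 u u1 u2 d :
  0 <= K -> a < b -> cont_on a b e -> cont_on a b u ->
  (forall x, a < x < b -> is_derive e x (e1 x)) ->
  (forall x, a < x < b -> is_derive e1 x (e2 x)) ->
  (forall x, a < x < b -> e2 x - K * e x = u x) ->
  (forall x, a < x < b -> is_derive u x (u1 x)) ->
  (forall x, a < x < b -> is_derive u1 x (u2 x)) ->
  (forall x, a < x < b -> u2 x - K * u x <= M) ->
  e a = 0 -> e b = 0 -> - m <= u a -> u b = m ->
  (forall eta, 0 < eta -> exists del, 0 < del /\ forall y, a <= y < b -> b - y < del ->
      Rabs ((e y - e b) / (y - b) - d) < eta) ->
  exists rho tau, 0 < rho /\ tau <= ((b - a) / 2) ^ 2 /\ rho * (m - tau * M) <= d.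
Proof.
  intros HK Hab Hce Hcu He1 He2 Hee Hu1 Hu2 Huu Hea Heb Hua Hub Hder.
  set (c := (a + b) / 2). set (H := (b - a) / 2).
  destruct (eps_family K c H m M HK ltac:(unfold H; lra)) as
    [rho [tau [v [v1 [v2 [ep [ep1 [ep2 [Hrho [Htau [Hv1 [Hv2 [Hep1 [Hep2
     [Hvo [Heo [Hva [Hvb [Hepa [Hepb [Hd1 Hd2]]]]]]]]]]]]]]]]]]]]].
  assert (Ea : c - H = a) by (unfold c, H; field).
  assert (Eb : c + H = b) by (unfold c, H; field).
  rewrite Ea in Hva, Hepa, Hd2. rewrite Eb in Hvb, Hepb, Hd1.
  assert (Step1 : forall x, a <= x <= b -> 0 <= 1 * u x + -1 * v x).
  { apply (MP K a b _ (fun x => 1 * u1 x + -1 * v1 x) (fun x => 1 * u2 x + -1 * v2 x) HK Hab).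
    - apply cont_on_lin; auto. apply (cont_on_deriv a b v v1); auto.
    - intros x Hx. apply lin_d; auto.
    - intros x Hx. apply lin_d; auto.
    - lra.
    - lra.
    - intros x Hx. specialize (Huu x Hx). specialize (Hvo x). lra. }
  assert (Step2 : forall x, a <= x <= b -> 0 <= 1 * ep x + -1 * e x).
  { apply (MP K a b _ (fun x => 1 * ep1 x + -1 * e1 x) (fun x => 1 * ep2 x + -1 * e2 x) HK Hab).
    - apply cont_on_lin; auto. apply (cont_on_deriv a b ep ep1); auto.
    - intros x Hx. apply lin_d; auto.
    - intros x Hx. apply lin_d; auto.
    - lra.
    - lra.
    - intros x Hx. specialize (Hee x Hx). specialize (Heo x).
      specialize (Step1 x ltac:(lra)). lra. }
  exists rho, tau. split; auto. split; auto.
  rewrite <- Hd1.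
  apply (deriv_cmp_right a b e ep (ep1 b) d Hab); auto.
  intros y Hy. specialize (Step2 y Hy). lra.
Qed.

Lemma knot_right K M m a b e e1 e2 u u1 u2 d :
  0 <= K -> a < b -> cont_on a b e -> cont_on a b u ->
  (forall x, a < x < b -> is_derive e x (e1 x)) ->
  (forall x, a < x < b -> is_derive e1 x (e2 x)) ->
  (forall x, a < x < b -> e2 x - K * e x = u x) ->
  (forall x, a < x < b -> is_derive u x (u1 x)) ->
  (forall x, a < x < b -> is_derive u1 x (u2 x)) ->
  (forall x, a < x < b -> u2 x - K * u x <= M) ->
  e a = 0 -> e b = 0 -> u a = m -> - m <= u b ->
  (forall eta, 0 < eta -> exists del, 0 < del /\ forall y, a < y <= b -> y - a < del ->
      Rabs ((e y - e a) / (y - a) - d) < eta) ->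
  exists rho tau, 0 < rho /\ tau <= ((b - a) / 2) ^ 2 /\ d <= - (rho * (m - tau * M)).
Proof.
  intros HK Hab Hce Hcu He1 He2 Hee Hu1 Hu2 Huu Hea Heb Hua Hub Hder.
  set (c := (a + b) / 2). set (H := (b - a) / 2).
  destruct (eps_family K c H (- m) M HK ltac:(unfold H; lra)) as
    [rho [tau [v [v1 [v2 [ep [ep1 [ep2 [Hrho [Htau [Hv1 [Hv2 [Hep1 [Hep2
     [Hvo [Heo [Hva [Hvb [Hepa [Hepb [Hd1 Hd2]]]]]]]]]]]]]]]]]]]]].
  assert (Ea : c - H = a) by (unfold c, H; field).
  assert (Eb : c + H = b) by (unfold c, H; field).
  rewrite Ea in Hva, Hepa, Hd2. rewrite Eb in Hvb, Hepb, Hd1.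
  assert (Step1 : forall x, a <= x <= b -> 0 <= 1 * u x + -1 * v x).
  { apply (MP K a b _ (fun x => 1 * u1 x + -1 * v1 x) (fun x => 1 * u2 x + -1 * v2 x) HK Hab).
    - apply cont_on_lin; auto. apply (cont_on_deriv a b v v1); auto.
    - intros x Hx. apply lin_d; auto.
    - intros x Hx. apply lin_d; auto.
    - lra.
    - lra.
    - intros x Hx. specialize (Huu x Hx). specialize (Hvo x). lra. }
  assert (Step2 : forall x, a <= x <= b -> 0 <= 1 * ep x + -1 * e x).
  { apply (MP K a b _ (fun x => 1 * ep1 x + -1 * e1 x) (fun x => 1 * ep2 x + -1 * e2 x) HK Hab).
    - apply cont_on_lin; auto. apply (cont_on_deriv a b ep ep1); auto.
    - intros x Hx. apply lin_d; auto.
    - intros x Hx. apply lin_d; auto.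
    - lra.
    - lra.
    - intros x Hx. specialize (Hee x Hx). specialize (Heo x).
      specialize (Step1 x ltac:(lra)). lra. }
  exists rho, tau. split; auto. split; auto.
  replace (- (rho * (m - tau * M))) with (rho * (- m + tau * M)) by ring.
  rewrite <- Hd2.
  apply (deriv_cmp_left a b e ep (ep1 a) d Hab); auto.
  intros y Hy. specialize (Step2 y Hy). lra.
Qed.

Lemma Rabs_bnd x a : Rabs x <= a -> - a <= x <= a.
Proof. unfold Rabs; destruct Rcase_abs; intros; lra. Qed.

Lemma Rabs_le2 x a : - a <= x <= a -> Rabs x <= a.
Proof. unfold Rabs; destruct Rcase_abs; intros; lra. Qed.

Ltac toR := match goal with |- ?a = ?b => change (@eq R a b) end.

Lemma piece_bound K G m a b phi phi1 phi2 :
  0 <= K -> a < b -> 0 <= m -> 0 <= G -> cont_on a b phi ->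
  (forall x, a < x < b -> is_derive phi x (phi1 x)) ->
  (forall x, a < x < b -> is_derive phi1 x (phi2 x)) ->
  (forall x, a < x < b -> Rabs (phi2 x - K * phi x) <= G) ->
  Rabs (phi a) <= m -> Rabs (phi b) <= m ->
  forall x, a <= x <= b -> Rabs (phi x) <= m + G * ((x - a) * (b - x)) / 2.
Proof.
  intros HK Hab Hm HG Hc Hd1 Hd2 Hop Ha Hb.
  set (q := fun x => m + G * ((x - a) * (b - x)) / 2).
  set (q1 := fun x => G * (a + b - 2 * x) / 2).
  assert (Hq1 : forall x, is_derive q x (q1 x)).
  { intros x. unfold q, q1. auto_derive; auto. field. }
  assert (Hq2 : forall x, is_derive q1 x (- G)).
  { intros x. unfold q1. auto_derive; auto. field. }
  assert (Hcq : cont_on a b q) by (apply (cont_on_deriv a b q q1); auto).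
  assert (S1 : forall x, a <= x <= b -> 0 <= 1 * q x + -1 * phi x).
  { apply (MP K a b _ (fun x => 1 * q1 x + -1 * phi1 x) (fun x => 1 * (- G) + -1 * phi2 x) HK Hab).
    - apply cont_on_lin; auto.
    - intros x Hx. apply lin_d; auto.
    - intros x Hx. apply lin_d; auto.
    - unfold q. apply Rabs_bnd in Ha. ring_simplify. lra.
    - unfold q. apply Rabs_bnd in Hb. ring_simplify. lra.
    - intros x Hx. specialize (Hop x Hx). apply Rabs_bnd in Hop. unfold q.
      assert (0 <= K * (m + G * ((x - a) * (b - x)) / 2)).
      { apply Rmult_le_pos; auto. assert (0 <= G * ((x - a) * (b - x))).
        apply Rmult_le_pos; nra. lra. }
      lra. }
  assert (S2 : forall x, a <= x <= b -> 0 <= 1 * q x + 1 * phi x).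
  { apply (MP K a b _ (fun x => 1 * q1 x + 1 * phi1 x) (fun x => 1 * (- G) + 1 * phi2 x) HK Hab).
    - apply cont_on_lin; auto.
    - intros x Hx. apply lin_d; auto.
    - intros x Hx. apply lin_d; auto.
    - unfold q. apply Rabs_bnd in Ha. ring_simplify. lra.
    - unfold q. apply Rabs_bnd in Hb. ring_simplify. lra.
    - intros x Hx. specialize (Hop x Hx). apply Rabs_bnd in Hop. unfold q.
      assert (0 <= K * (m + G * ((x - a) * (b - x)) / 2)).
      { apply Rmult_le_pos; auto. assert (0 <= G * ((x - a) * (b - x))).
        apply Rmult_le_pos; nra. lra. }
      lra. }
  intros x Hx. specialize (S1 x Hx). specialize (S2 x Hx). unfold q in *.
  apply Rabs_le2. lra.
Qed.

Section LopE.
Variable E : R -> R.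
Hypothesis HE : forall k y, (k <= 4)%nat -> ex_derive_n E k y.

Lemma Dk_d k y : (k <= 3)%nat -> is_derive (Derive_n E k) y (Derive_n E (S k) y).
Proof.
  intros Hk. assert (H := HE (S k) y ltac:(lia)). simpl in H.
  apply Derive_correct in H. exact H.
Qed.

Lemma lin2_d f g df dg x (c1 c2 : R) : is_derive f x df -> is_derive g x dg ->
  is_derive (fun y => f y + c2 * g y) x (df + c2 * dg).
Proof.
  intros Hf Hg.
  apply (is_derive_plus f (fun y => c2 * g y)); auto. apply is_derive_scal; auto.
Qed.

Lemma Lop_eval xi x : Lop [xi; xi; - xi; - xi] E x =
  Derive_n E 4 x - 2 * xi ^ 2 * Derive_n E 2 x + xi ^ 4 * E x.
Proof.
  set (D := Derive_n E).
  assert (H1 : forall y, Lop [- xi] E y = D 1%nat y + xi * D 0%nat y).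
  { intros y. unfold D. simpl. change (Derive (fun x0 => E x0) y) with (Derive E y). ring. }
  assert (H2 : forall y, Lop [- xi; - xi] E y =
     (D 2%nat y + xi * D 1%nat y) + xi * (D 1%nat y + xi * D 0%nat y)).
  { intros y. change (Lop [- xi; - xi] E y) with (Derive (Lop [- xi] E) y - (- xi) * Lop [- xi] E y).
    rewrite (Derive_ext _ _ y H1), H1.
    rewrite (is_derive_unique _ _ (D 2%nat y + xi * D 1%nat y)). ring.
    apply lin2_d; auto; apply Dk_d; lia. }
  assert (H2' : forall y, Lop [- xi; - xi] E y =
     D 2%nat y + (2 * xi) * (D 1%nat y + (xi / 2) * D 0%nat y)).
  { intros y. rewrite H2. field. }
  assert (H3 : forall y, Lop [xi; - xi; - xi] E y =
     D 3%nat y + xi * D 2%nat y - xi ^ 2 * D 1%nat y - xi ^ 3 * D 0%nat y).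
  { intros y. change (Lop [xi; - xi; - xi] E y) with
      (Derive (Lop [- xi; - xi] E) y - xi * Lop [- xi; - xi] E y).
    rewrite (Derive_ext _ _ y H2'), H2'.
    rewrite (is_derive_unique _ _ (D 3%nat y + (2 * xi) * (D 2%nat y + (xi / 2) * D 1%nat y))).
    field.
    apply lin2_d; auto. apply Dk_d; lia. apply lin2_d; auto; apply Dk_d; lia. }
  assert (H3' : forall y, Lop [xi; - xi; - xi] E y =
     D 3%nat y + xi * (D 2%nat y + (- xi) * (D 1%nat y + xi * D 0%nat y))).
  { intros y. rewrite H3. ring. }
  change (Lop [xi; xi; - xi; - xi] E x) with
      (Derive (Lop [xi; - xi; - xi] E) x - xi * Lop [xi; - xi; - xi] E x).
  rewrite (Derive_ext _ _ x H3'), H3'.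
  rewrite (is_derive_unique _ _ (D 4%nat x + xi * (D 3%nat x + (- xi) * (D 2%nat x + xi * D 1%nat x)))).
  unfold D. simpl. ring.
  apply lin2_d; auto. apply Dk_d; lia. apply lin2_d; auto. apply Dk_d; lia.
  apply lin2_d; auto; apply Dk_d; lia.
Qed.
End LopE.

Lemma t_mono (t : nat -> R) n : (forall j, (1 <= j < n)%nat -> t j < t (S j)) ->
  forall i j, (1 <= i <= j)%nat -> (j <= n)%nat -> t i <= t j.
Proof.
  intros Ht i j Hij Hjn. induction j as [|j IH].
  - lia.
  - destruct (Nat.eq_dec i (S j)) as [->|Hne]. lra.
    assert (t j <= t (S j)) by (left; apply Ht; lia).
    assert (t i <= t j) by (apply IH; lia). lra.
Qed.

Lemma maxgap_pos t k : 0 <= maxgap t k.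
Proof. induction k; simpl. lra. eapply Rle_trans. apply IHk. apply Rmax_l. Qed.

Lemma gap_le t k j : (1 <= j <= k)%nat -> t (S j) - t j <= maxgap t k.
Proof.
  induction k as [|k IH]; intros Hj. lia.
  simpl. destruct (Nat.eq_dec j (S k)) as [->|Hne].
  - apply Rmax_r.
  - eapply Rle_trans. apply IH; lia. apply Rmax_l.
Qed.

Lemma gap_mesh t n j : (1 <= j < n)%nat -> t (S j) - t j <= mesh t n.
Proof. intros. unfold mesh. apply gap_le. lia. Qed.

Lemma argmax_nat (f : nat -> R) n : (1 <= n)%nat ->
  exists j, (1 <= j <= n)%nat /\ forall k, (1 <= k <= n)%nat -> f k <= f j.
Proof.
  induction n as [|n IH]; intros Hn. lia.
  destruct (Nat.eq_dec n 0) as [->|Hn0].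
  - exists 1%nat. split. lia. intros k Hk. assert (k = 1%nat) by lia. subst. lra.
  - destruct (IH ltac:(lia)) as [j [Hj Hjm]].
    destruct (Rle_dec (f (S n)) (f j)).
    + exists j. split. lia. intros k Hk. destruct (Nat.eq_dec k (S n)) as [->|]; auto.
      apply Hjm; lia.
    + exists (S n). split. lia. intros k Hk. destruct (Nat.eq_dec k (S n)) as [->|]. lra.
      specialize (Hjm k ltac:(lia)). lra.
Qed.

Lemma locate_piece (t : nat -> R) n x : (2 <= n)%nat ->
  (forall j, (1 <= j < n)%nat -> t j < t (S j)) ->
  t 1%nat <= x <= t n -> exists j, (1 <= j < n)%nat /\ t j <= x <= t (S j).
Proof.
  intros Hn Ht. induction n as [|n IH]; intros Hx. lia.
  destruct (Nat.eq_dec n 1) as [->|Hn1].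
  - exists 1%nat. split. lia. auto.
  - destruct (Rle_dec x (t n)) as [Hle|Hgt].
    + destruct IH as [j [Hj Hj']]. lia. intros j Hj. apply Ht. lia. lra.
      exists j. split. lia. auto.
    + exists n. split. lia. lra.
Qed.

Lemma cont_on_ext a b (f g : R -> R) : (forall x, f x = g x) -> cont_on a b f -> cont_on a b g.
Proof. intros E H x Hx eps Heps. destruct (H x Hx eps Heps) as [d [Hd Hd']].
  exists d. split; auto. intros y Hy Hyx. rewrite <- !E. auto. Qed.

Lemma loc_eq a b (f g : R -> R) x : a < x < b -> (forall y, a < y < b -> f y = g y) ->
  locally x (fun y => f y = g y).
Proof.
  intros Hx H. assert (Hp : 0 < Rmin (x - a) (b - x)) by (apply Rmin_glb_lt; lra).
  exists (mkposreal _ Hp). intros y Hy. change (Rabs (y - x) < Rmin (x - a) (b - x)) in Hy.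
  assert (H1 := Rmin_l (x - a) (b - x)). assert (H2 := Rmin_r (x - a) (b - x)).
  apply Rabs_def2 in Hy. apply H. lra.
Qed.

Lemma cont_on_scal a b f c : cont_on a b f -> cont_on a b (fun y => c * f y).
Proof.
  intros H. apply (cont_on_ext a b (fun y => c * f y + 0 * f y)). intros; ring.
  apply cont_on_lin; auto.
Qed.

Lemma pos_helper rho tau h D M m : 0 < rho -> tau <= (h / 2) ^ 2 -> 0 <= h <= D ->
  0 <= M -> D ^ 2 * M / 4 < m -> 0 < rho * (m - tau * M).
Proof.
  intros Hr Ht Hh HM Hm. apply Rmult_lt_0_compat; auto.
  assert ((h / 2) ^ 2 <= D ^ 2 / 4) by nra.
  assert (tau * M <= D ^ 2 / 4 * M) by nra.
  lra.
Qed.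

Theorem mainTheorem1 (xi : R) (n : nat) (t : nat -> R)
  (F : R -> R) (dF : nat -> R -> R) (I4F : R -> R) (dI : nat -> R -> R) :
  (2 <= n)%nat ->
  (forall j, (1 <= j < n)%nat -> t j < t (S j)) ->
  Ck_on 4 (t 1%nat) (t n) F dF ->
  exp_spline [xi; xi; - xi; - xi] t n I4F ->
  Ck_on 2 (t 1%nat) (t n) I4F dI ->
  (forall j, (1 <= j <= n)%nat -> I4F (t j) = F (t j)) ->
  dI 1%nat (t 1%nat) = dF 1%nat (t 1%nat) ->
  dI 1%nat (t n) = dF 1%nat (t n) ->
  forall M : R,
  (forall theta, t 1%nat <= theta <= t n ->
     Rabs (dF 4%nat theta - 2 * xi ^ 2 * dF 2%nat theta + xi ^ 4 * F theta) <= M) ->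
  forall x, t 1%nat <= x <= t n ->
    Rabs (F x - I4F x) <= 5 / 64 * mesh t n ^ 4 * M.
Proof.
  intros Hn Ht HF Hspl HI Hint Hd1 Hdn M HM x Hx.
  destruct HF as [HF0 [HFd HFc]]. destruct HI as [HI0 [HId HIc]].
  destruct Hspl as [_ Hpieces].
  set (K := xi ^ 2).
  assert (HK : 0 <= K) by (unfold K; nra).
  assert (Htm := t_mono t n Ht).
  assert (Ht1n : t 1%nat < t n).
  { apply Rlt_le_trans with (t 2%nat). apply Ht; lia. apply Htm; lia. }
  set (a1 := t 1%nat) in *. set (an := t n) in *.
  assert (HFc' : forall k, (k <= 4)%nat -> cont_on a1 an (dF k)).
  { intros k Hk y Hy. apply within_cont. apply HFc; auto. }
  assert (HIc' : forall k, (k <= 2)%nat -> cont_on a1 an (dI k)).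
  { intros k Hk y Hy. apply within_cont. apply HIc; auto. }
  assert (HFi : forall k y, (k < 4)%nat -> a1 < y < an -> is_derive (dF k) y (dF (S k) y)).
  { intros k y Hk Hy. apply (deriv_on_interior a1 an); auto. }
  assert (HIi : forall k y, (k < 2)%nat -> a1 < y < an -> is_derive (dI k) y (dI (S k) y)).
  { intros k y Hk Hy. apply (deriv_on_interior a1 an); auto. }
  set (e := fun y => 1 * dF 0%nat y + -1 * dI 0%nat y).
  set (e1 := fun y => 1 * dF 1%nat y + -1 * dI 1%nat y).
  set (e2 := fun y => 1 * dF 2%nat y + -1 * dI 2%nat y).
  set (u := fun y => 1 * e2 y + - K * e y).
  set (LF := fun y => dF 4%nat y - 2 * K * dF 2%nat y + K ^ 2 * dF 0%nat y).
  assert (HLF : forall y, a1 <= y <= an -> Rabs (LF y) <= M).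
  { intros y Hy. unfold LF, K. rewrite HF0. replace ((xi ^ 2) ^ 2) with (xi ^ 4) by ring. auto. }
  assert (HM0 : 0 <= M).
  { eapply Rle_trans. apply Rabs_pos. apply (HLF a1). lra. }
  assert (Hce : cont_on a1 an e) by (apply cont_on_lin; apply HFc' || apply HIc'; lia).
  assert (Hce2 : cont_on a1 an e2) by (apply cont_on_lin; apply HFc' || apply HIc'; lia).
  assert (Hcu : cont_on a1 an u) by (apply cont_on_lin; auto).
  assert (Hde : forall y, a1 < y < an -> is_derive e y (e1 y)).
  { intros y Hy. apply lin_d; [apply HFi|apply HIi]; auto; lia. }
  assert (Hde1 : forall y, a1 < y < an -> is_derive e1 y (e2 y)).
  { intros y Hy. apply lin_d; [apply HFi|apply HIi]; auto; lia. }
  assert (Heu : forall y, e2 y - K * e y = u y).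
  { intros y. unfold u. ring. }
  assert (Hek : forall j, (1 <= j <= n)%nat -> e (t j) = 0).
  { intros j Hj. unfold e. rewrite HF0, HI0. rewrite Hint; auto. ring. }
  assert (He1a : e1 a1 = 0) by (unfold e1; rewrite Hd1; ring).
  assert (He1b : e1 an = 0) by (unfold e1; rewrite Hdn; ring).
  assert (Hqe : forall b, a1 <= b <= an -> forall eta, 0 < eta -> exists del, 0 < del /\
     forall y, a1 <= y <= an -> y <> b -> Rabs (y - b) < del ->
       Rabs ((e y - e b) / (y - b) - e1 b) < eta).
  { intros b Hb eta Heta.
    destruct (deriv_on_eps _ _ _ _ b (HFd 0%nat ltac:(lia)) Hb (eta / 2) ltac:(lra)) as [d1 [Hd1p Hd1']].
    destruct (deriv_on_eps _ _ _ _ b (HId 0%nat ltac:(lia)) Hb (eta / 2) ltac:(lra)) as [d2 [Hd2p Hd2']].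
    exists (Rmin d1 d2). split. apply Rmin_glb_lt; auto.
    intros y Hy Hyb Hyd.
    specialize (Hd1' y Hy Hyb (Rlt_le_trans _ _ _ Hyd (Rmin_l _ _))).
    specialize (Hd2' y Hy Hyb (Rlt_le_trans _ _ _ Hyd (Rmin_r _ _))).
    replace ((e y - e b) / (y - b) - e1 b) with
      (((dF 0%nat y - dF 0%nat b) / (y - b) - dF 1%nat b) - ((dI 0%nat y - dI 0%nat b) / (y - b) - dI 1%nat b)).
    2: { unfold e, e1. field. lra. }
    eapply Rle_lt_trans. apply Rabs_triang. rewrite Rabs_Ropp. lra. }
  assert (Hpiece : forall j, (1 <= j < n)%nat -> exists u1 u2 : R -> R,
     forall y, t j < y < t (S j) -> is_derive u y (u1 y) /\ is_derive u1 y (u2 y) /\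
       u2 y - K * u y = LF y).
  { intros j Hj. destruct (Hpieces j Hj) as [E [[HEd [_ HL]] HIE]].
    simpl in HEd.
    assert (HE : forall k y, (k <= 4)%nat -> ex_derive_n E k y) by (intros; apply HEd; lia).
    assert (Hja : a1 <= t j) by (apply Htm; lia).
    assert (Hjb : t (S j) <= an) by (apply Htm; lia).
    assert (Hjab : t j < t (S j)) by (apply Ht; lia).
    assert (C1 : forall y, t j < y < t (S j) -> dI 1%nat y = Derive_n E 1 y).
    { intros y Hy. symmetry. apply is_derive_unique.
      apply (is_derive_ext_loc (dI 0%nat)).
      apply (loc_eq (t j) (t (S j))); auto. intros z Hz. rewrite HI0. apply HIE; lra.
      apply HIi; [lia|lra]. }
    assert (C2 : forall y, t j < y < t (S j) -> dI 2%nat y = Derive_n E 2 y).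
    { intros y Hy. symmetry. apply is_derive_unique.
      apply (is_derive_ext_loc (dI 1%nat)).
      apply (loc_eq (t j) (t (S j))); auto.
      apply HIi; [lia|lra]. }
    set (D := Derive_n E) in *.
    exists (fun y => 1 * (1 * dF 3%nat y + -1 * D 3%nat y) + - K * (1 * dF 1%nat y + -1 * D 1%nat y)).
    exists (fun y => 1 * (1 * dF 4%nat y + -1 * D 4%nat y) + - K * (1 * dF 2%nat y + -1 * D 2%nat y)).
    intros y Hy.
    assert (Hy' : a1 < y < an) by lra.
    split; [|split].
    - apply (is_derive_ext_loc
        (fun y => 1 * (1 * dF 2%nat y + -1 * D 2%nat y) + - K * (1 * dF 0%nat y + -1 * D 0%nat y))).
      apply (loc_eq (t j) (t (S j))); auto. intros z Hz. unfold u, e2, e.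
      rewrite C2 by lra. rewrite HI0. rewrite (HIE z) by lra. reflexivity.
      apply lin_d; apply lin_d; try (apply HFi; auto; lia); apply Dk_d; auto; lia.
    - apply lin_d; apply lin_d; try (apply HFi; auto; lia); apply Dk_d; auto; lia.
    - assert (HLy := HL y). rewrite Lop_eval in HLy by auto.
      unfold u, e2, e, LF. rewrite C2 by lra. rewrite HI0. rewrite (HIE y) by lra.
      unfold K. fold D in HLy. change (D 0%nat y) with (E y). nra. }
  set (Dl := mesh t n).
  assert (HDl : forall j, (1 <= j < n)%nat -> t (S j) - t j <= Dl) by (intros; apply gap_mesh; auto).
  destruct (argmax_nat (fun k => Rabs (u (t k))) n ltac:(lia)) as [jm [Hjm Hjmax]].
  set (m := Rabs (u (t jm))) in *.
  assert (Hmb : m <= Dl ^ 2 * M / 4).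
  { destruct (Rle_dec m (Dl ^ 2 * M / 4)) as [|Hgt]; auto. exfalso.
    apply Rnot_le_lt in Hgt.
    assert (Hsig : exists sg, Rabs sg = 1 /\ sg * u (t jm) = m).
    { unfold m, Rabs; destruct Rcase_abs; [exists (-1)|exists 1];
      (split; [destruct Rcase_abs; lra|ring]). }
    destruct Hsig as [sg [Hsg Hsgu]].
    assert (Hq2 : forall b, a1 <= b <= an -> forall eta, 0 < eta -> exists del, 0 < del /\
       forall y, a1 <= y <= an -> y <> b -> Rabs (y - b) < del ->
       Rabs (((fun z => sg * e z) y - (fun z => sg * e z) b) / (y - b) - sg * e1 b) < eta).
    { intros b Hb eta Heta. destruct (Hqe b Hb eta Heta) as [d [Hd Hd']].
      exists d. split; auto. intros y Hy Hyb Hyd.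
      replace ((sg * e y - sg * e b) / (y - b) - sg * e1 b) with
        (sg * ((e y - e b) / (y - b) - e1 b)) by (field; lra).
      rewrite Rabs_mult, Hsg, Rmult_1_l. auto. }
    assert (Hleft : (2 <= jm)%nat -> 0 < sg * e1 (t jm)).
    { intros Hj2. destruct jm as [|j]. lia.
      assert (Hja : a1 <= t j) by (apply Htm; lia).
      assert (Hjb : t (S j) <= an) by (apply Htm; lia).
      assert (Hjab : t j < t (S j)) by (apply Ht; lia).
      destruct (Hpiece j ltac:(lia)) as [u1 [u2 Hu]].
      destruct (knot_left K M m (t j) (t (S j)) (fun z => sg * e z) (fun z => sg * e1 z)
        (fun z => sg * e2 z) (fun z => sg * u z) (fun z => sg * u1 z) (fun z => sg * u2 z)
        (sg * e1 (t (S j))) HK Hjab) as [rho [tau [Hrho [Htau Hineq]]]].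
      - apply cont_on_scal. apply (cont_on_sub a1 an); auto.
      - apply cont_on_scal. apply (cont_on_sub a1 an); auto.
      - intros y Hy. apply is_derive_scal. apply Hde. lra.
      - intros y Hy. apply is_derive_scal. apply Hde1. lra.
      - intros y Hy. rewrite <- Heu. ring.
      - intros y Hy. apply is_derive_scal. apply Hu; auto.
      - intros y Hy. apply is_derive_scal. apply Hu; auto.
      - intros y Hy. destruct (Hu y Hy) as [_ [_ E]].
        replace (sg * u2 y - K * (sg * u y)) with (sg * LF y) by (rewrite <- E; ring).
        eapply Rle_trans. apply Rle_abs. rewrite Rabs_mult, Hsg, Rmult_1_l. apply HLF. lra.
      - rewrite Hek by lia. ring.
      - rewrite Hek by lia. ring.
      - assert (Hj' := Hjmax j ltac:(lia)). simpl in Hj'.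
        assert (Hb' : Rabs (sg * u (t j)) <= m) by (rewrite Rabs_mult, Hsg, Rmult_1_l; auto).
        apply Rabs_bnd in Hb'. lra.
      - exact Hsgu.
      - intros eta Heta. destruct (Hq2 (t (S j)) ltac:(lra) eta Heta) as [d [Hd Hd']].
        exists d. split; auto. intros y Hy Hyd. apply Hd'. lra. lra.
        rewrite Rabs_left by lra. lra.
      - assert (Hp := pos_helper rho tau (t (S j) - t j) Dl M m Hrho Htau
           ltac:(split; [lra|apply HDl; lia]) HM0 Hgt). lra. }
    assert (Hright : (jm < n)%nat -> sg * e1 (t jm) < 0).
    { intros Hjn. set (j := jm) in *.
      assert (Hja : a1 <= t j) by (apply Htm; lia).
      assert (Hjb : t (S j) <= an) by (apply Htm; lia).
      assert (Hjab : t j < t (S j)) by (apply Ht; lia).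
      destruct (Hpiece j ltac:(lia)) as [u1 [u2 Hu]].
      destruct (knot_right K M m (t j) (t (S j)) (fun z => sg * e z) (fun z => sg * e1 z)
        (fun z => sg * e2 z) (fun z => sg * u z) (fun z => sg * u1 z) (fun z => sg * u2 z)
        (sg * e1 (t j)) HK Hjab) as [rho [tau [Hrho [Htau Hineq]]]].
      - apply cont_on_scal. apply (cont_on_sub a1 an); auto.
      - apply cont_on_scal. apply (cont_on_sub a1 an); auto.
      - intros y Hy. apply is_derive_scal. apply Hde. lra.
      - intros y Hy. apply is_derive_scal. apply Hde1. lra.
      - intros y Hy. rewrite <- Heu. ring.
      - intros y Hy. apply is_derive_scal. apply Hu; auto.
      - intros y Hy. apply is_derive_scal. apply Hu; auto.
      - intros y Hy. destruct (Hu y Hy) as [_ [_ E]].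
        replace (sg * u2 y - K * (sg * u y)) with (sg * LF y) by (rewrite <- E; ring).
        eapply Rle_trans. apply Rle_abs. rewrite Rabs_mult, Hsg, Rmult_1_l. apply HLF. lra.
      - rewrite Hek by lia. ring.
      - rewrite Hek by lia. ring.
      - exact Hsgu.
      - assert (Hj' := Hjmax (S j) ltac:(lia)). simpl in Hj'.
        assert (Hb' : Rabs (sg * u (t (S j))) <= m) by (rewrite Rabs_mult, Hsg, Rmult_1_l; auto).
        apply Rabs_bnd in Hb'. lra.
      - intros eta Heta. destruct (Hq2 (t j) ltac:(lra) eta Heta) as [d [Hd Hd']].
        exists d. split; auto. intros y Hy Hyd. apply Hd'. lra. lra.
        rewrite Rabs_right by lra. lra.
      - assert (Hp := pos_helper rho tau (t (S j) - t j) Dl M m Hrho Htau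
           ltac:(split; [lra|apply HDl; lia]) HM0 Hgt). lra. }
    destruct (Nat.eq_dec jm 1) as [Hj1|Hj1].
    - assert (H0 := Hright ltac:(lia)). rewrite Hj1 in H0. fold a1 in H0. rewrite He1a in H0. lra.
    - destruct (Nat.eq_dec jm n) as [Hjn|Hjn].
      + assert (H0 := Hleft ltac:(lia)). rewrite Hjn in H0. fold an in H0. rewrite He1b in H0. lra.
      + assert (H0 := Hleft ltac:(lia)). assert (H1 := Hright ltac:(lia)). lra. }
  assert (Hm0 : 0 <= m) by apply Rabs_pos.
  set (W := Dl ^ 2 * M / 4 + Dl ^ 2 * M / 8).
  assert (HuW : forall j, (1 <= j < n)%nat -> forall y, t j <= y <= t (S j) -> Rabs (u y) <= W).
  { intros j Hj y Hy.
    assert (Hja : a1 <= t j) by (apply Htm; lia).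
    assert (Hjb : t (S j) <= an) by (apply Htm; lia).
    assert (Hjab : t j < t (S j)) by (apply Ht; lia).
    assert (Hh := HDl j Hj).
    destruct (Hpiece j Hj) as [u1 [u2 Hu]].
    assert (Hb := piece_bound K M m (t j) (t (S j)) u u1 u2 HK Hjab Hm0 HM0
      ltac:(apply (cont_on_sub a1 an); auto)
      ltac:(intros z Hz; apply Hu; auto) ltac:(intros z Hz; apply Hu; auto)
      ltac:(intros z Hz; destruct (Hu z Hz) as [_ [_ E]]; rewrite E; apply HLF; lra)
      ltac:(apply (Hjmax j); lia) ltac:(apply (Hjmax (S j)); lia) y Hy).
    assert (Hq : (y - t j) * (t (S j) - y) <= Dl ^ 2 / 4).
    { assert ((y - t j) * (t (S j) - y) <= (t (S j) - t j) ^ 2 / 4) by (pose proof (pow2_ge_0 ((y - t j) - (t (S j) - y))); nra).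
      assert ((t (S j) - t j) ^ 2 <= Dl ^ 2) by (apply pow_incr; lra). lra. }
    assert (M * ((y - t j) * (t (S j) - y)) <= M * (Dl ^ 2 / 4)) by (apply Rmult_le_compat_l; auto).
    unfold W. lra. }
  destruct (locate_piece t n x Hn Ht Hx) as [j [Hj Hxj]].
  assert (Hja : a1 <= t j) by (apply Htm; lia).
  assert (Hjb : t (S j) <= an) by (apply Htm; lia).
  assert (Hjab : t j < t (S j)) by (apply Ht; lia).
  assert (Hh := HDl j Hj).
  assert (HW0 : 0 <= W) by (unfold W; assert (0 <= Dl ^ 2 * M) by (apply Rmult_le_pos; auto; apply pow2_ge_0); lra).
  assert (Hb := piece_bound K W 0 (t j) (t (S j)) e e1 e2 HK Hjab ltac:(lra) HW0
      ltac:(apply (cont_on_sub a1 an); auto)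
      ltac:(intros z Hz; apply Hde; lra) ltac:(intros z Hz; apply Hde1; lra)
      ltac:(intros z Hz; rewrite Heu; apply (HuW j Hj); lra)
      ltac:(rewrite Hek by lia; rewrite Rabs_R0; lra)
      ltac:(rewrite Hek by lia; rewrite Rabs_R0; lra) x Hxj).
  assert (HeF : e x = F x - I4F x) by (unfold e; rewrite HF0, HI0; ring).
  rewrite <- HeF.
  assert (Hq : (x - t j) * (t (S j) - x) <= Dl ^ 2 / 4).
  { assert ((x - t j) * (t (S j) - x) <= (t (S j) - t j) ^ 2 / 4) by (pose proof (pow2_ge_0 ((x - t j) - (t (S j) - x))); nra).
    assert ((t (S j) - t j) ^ 2 <= Dl ^ 2) by (apply pow_incr; lra). lra. }
  assert (W * ((x - t j) * (t (S j) - x)) <= W * (Dl ^ 2 / 4)) by (apply Rmult_le_compat_l; auto).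
  assert (HD4 : 0 <= Dl ^ 4 * M) by (apply Rmult_le_pos; auto; apply pow_le; apply maxgap_pos).
  assert (Heq : W * (Dl ^ 2 / 4) = 3 / 32 * (Dl ^ 4 * M)) by (unfold W; field).
  assert (Heq2 : 5 / 64 * Dl ^ 4 * M = 5 / 64 * (Dl ^ 4 * M)) by field.
  rewrite Heq2. lra.
Qed.
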